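(* Let $p_{d,k,n}$ denote the number of directed plateau polyhypercubes of dimension $d$, width $k$ and lateral area $n$. Then for $d\geq 3$, $k\geq 1$ and $n\geq (d-1)k$, $$p_{d,k,n}=\sum_{j_2+j_3+\cdots+j_d=n}\ \prod_{l=2}^{d}\binom{j_l+k-2}{j_l-k},$$ where the sum is over nonnegative integers $j_2,\dots,j_d$.
   Context: Work in $\mathbb{Z}^d$ with orthonormal coordinate system $(0,\vec{i_1},\dots,\vec{i_d})$; a cell is a unit hypercube of the lattice. A polyhypercube of dimension $d$ is a finite union of cells, connected through their $(d-1)$-dimensional faces, defined up to translation. Its width is the number of distinct values of the $\vec{i_1}$-coordinate taken by its cells; its strata are its intersections with the layers of constant $\vec{i_1}$-coordinate. A plateau is a stratum that is a hyperrectangle. An elementary step is a positive move of one unit along one axis. A polyhypercube is directed if every cell can be reached from a distinguished root cell by a path of cells of the polyhypercube using only elementary steps. A directed plateau polyhypercube is a directed polyhypercube all of whose strata are plateaus. The lateral area of a polyhypercube is the sum, over $2\leq l\leq d$, of the areas (numbers of unit squares) of the polyominoes obtained by projecting it onto the planes $(\vec{i_1},\vec{i_l})$. Convention: for $n\geq 0$, $\binom{n}{k}=0$ when $k<0$ or $k>n$. *)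

(* Defs.v *)
From HB Require Import structures.
From mathcomp Require Import all_boot all_order all_algebra.
From mathcomp Require Import finmap.
Set Implicit Arguments. Unset Strict Implicit. Unset Printing Implicit Defensive.
Import Order.TTheory GRing.Theory Num.Theory.
Local Open Scope ring_scope.


(* A cell of Z^d is identified with its minimal corner, a d-tuple of
   integers.  Coordinates are 0-based: coordinate 0 is the i_1 axis and
   coordinate l (1 <= l < d) is the i_(l+1) axis. *)
Definition cell (d : nat) := (d.-tuple int)%type.

Definition coord (d : nat) (c : cell d) (l : nat) : int := nth 0 c l.

Definition adjacent (d : nat) (c c' : cell d) : bool :=
  [exists i : 'I_d, (absz (coord c i - coord c' i) == 1%N) &&
     [forall j : 'I_d, (j != i) ==> (coord c j == coord c' j)]].

Definition elem_step (d : nat) (c c' : cell d) : bool :=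
  [exists i : 'I_d, (coord c' i == coord c i + 1) &&
     [forall j : 'I_d, (j != i) ==> (coord c j == coord c' j)]].

Definition polyhypercube (d : nat) (P : {fset cell d}) : Prop :=
  (P != fset0)%fset /\
  forall a b, a \in P -> b \in P ->
    exists p : seq (cell d),
      [&& path (@adjacent d) a p, last a p == b & all (fun x => x \in P) p].

Definition directed (d : nat) (P : {fset cell d}) : Prop :=
  exists2 r, r \in P &
    forall c, c \in P ->
      exists p : seq (cell d),
        [&& path (@elem_step d) r p, last r p == c & all (fun x => x \in P) p].

Definition plateau_at (d : nat) (P : {fset cell d}) (x : int) : Prop :=
  exists lo hi : cell d,
    forall c : cell d, coord c 0 = x ->
      (c \in P <-> forall l, (1 <= l < d)%N ->
                     coord lo l <= coord c l <= coord hi l).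

Definition all_plateaus (d : nat) (P : {fset cell d}) : Prop :=
  forall c, c \in P -> plateau_at P (coord c 0).

Definition directed_plateau (d : nat) (P : {fset cell d}) : Prop :=
  [/\ polyhypercube P, directed P & all_plateaus P].

Definition width (d : nat) (P : {fset cell d}) : nat :=
  #|` [fset coord c 0 | c in P]%fset |%fset.

Definition lateral_area (d : nat) (P : {fset cell d}) : nat :=
  (\sum_(1 <= l < d) #|` [fset (coord c 0, coord c l) | c in P]%fset |%fset)%N.

(* Canonical representative of a translation class of a nonempty finite set
   of cells: the minimum of each coordinate is 0. *)
Definition normalized (d : nat) (P : {fset cell d}) : Prop :=
  forall l, (l < d)%N ->
    (forall c, c \in P -> 0 <= coord c l) /\ exists2 c, c \in P & coord c l = 0.

Definition counted (d k n : nat) (P : {fset cell d}) : Prop :=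
  [/\ normalized P, directed_plateau P, width P = k & lateral_area P = n].

Definition card_is (T : eqType) (A : T -> Prop) (N : nat) : Prop :=
  exists s : seq T, [/\ uniq s, (forall x, x \in s <-> A x) & size s = N].

(* Binomial coefficient on integer arguments: 0 if the lower index is
   negative (or the upper index is negative), else the usual 'C(a, b),
   which is 0 when b > a. *)
Definition binz (a b : int) : nat :=
  if (0 <= a) && (0 <= b) then 'C(absz a, absz b) else 0%N.

(* Right-hand side: j ranges over (d-1)-tuples (j_2,...,j_d) of
   nonnegative integers with sum n (each such j_l is <= n). *)
Definition rhs (d k n : nat) : nat :=
  (\sum_(j : (d.-1).-tuple 'I_n.+1 | \sum_(l < d.-1) (tnth j l : nat) == n)
     \prod_(l < d.-1)
        binz ((tnth j l : nat)%:Z + k%:Z - 2) ((tnth j l : nat)%:Z - k%:Z))%N.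

(* Main.v *)
Require Import Defs.
From mathcomp Require Import all_boot all_order all_algebra.
From mathcomp Require Import finmap zify.
Import Defs.
Set Implicit Arguments. Unset Strict Implicit. Unset Printing Implicit Defensive.

Lemma hsum K J : \sum_(i < J) 'C(i + K, K.*2) = 'C(J + K, K.*2.+1).
Proof.
elim: J => [|J IH]; first by rewrite big_ord0 bin_small //; lia.
by rewrite big_ord_recr /= IH addSn binS addnC.
Qed.

Lemma tsum K J : \sum_(i < J) (J - i) * 'C(i + K, K.*2) = 'C(J.+1 + K, K.*2.+2).
Proof.
elim: J => [|J IH]; first by rewrite big_ord0 bin_small //; lia.
have -> : \sum_(i < J.+1) (J.+1 - i) * 'C(i + K, K.*2) =
   \sum_(i < J.+1) (J - i) * 'C(i + K, K.*2) + \sum_(i < J.+1) 'C(i + K, K.*2).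
  rewrite -big_split /=; apply: eq_bigr => i _.
  have := ltn_ord i => hi.
  rewrite (_ : J.+1 - i = (J - i).+1); last lia.
  by rewrite mulSn addnC.
rewrite hsum big_ord_recr /= subnn mul0n addn0 IH.
by rewrite [in RHS]addSn binS.
Qed.

Definition hK K j := if j is j'.+1 then 'C(j' + K, K.*2) else 0.

Lemma hK_rec K j : \sum_(i < j) (j - i) * hK K i = hK K.+1 j.
Proof.
case: j => [|J]; first by rewrite big_ord0.
rewrite big_ord_recl /= muln0 add0n /=.
have -> : (J + K.+1) = J.+1 + K by lia.
rewrite doubleS -tsum; apply: eq_bigr => i _ /=.
by rewrite /bump /= add1n subSS.
Qed.

Lemma binz_hK k j : 0 < k ->
  binz (j%:Z + k%:Z - 2)%R (j%:Z - k%:Z)%R = hK k.-1 j.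
Proof.
case: k => // K _ /=; rewrite /binz.
case: j => [|J] /=.
  by case: ifP => // /andP[_ h]; exfalso; lia.
case: (leqP K J) => hJ.
  case: ifP => [_|h]; last by exfalso; move: h; lia.
  have -> : absz (J.+1%:Z + K.+1%:Z - 2)%R = J + K by lia.
  have -> : absz (J.+1%:Z - K.+1%:Z)%R = J - K by lia.
  rewrite -[RHS]bin_sub; last lia.
  congr 'C(_, _); lia.
rewrite [RHS]bin_small; last lia.
by case: ifP => // /andP[_ h]; exfalso; lia.
Qed.

Lemma mem_body (T : eqType) (a x : T) s : x \in s -> x \in a :: s.
Proof. by rewrite inE => ->; rewrite orbT. Qed.

Lemma uniq_allp (S T R : eqType) (f : S -> T -> R) (s : seq S) (t : S -> seq T) :
  uniq s -> (forall x, x \in s -> uniq (t x)) ->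
  (forall x1 x2 y1 y2, x1 \in s -> x2 \in s -> y1 \in t x1 -> y2 \in t x2 ->
      f x1 y1 = f x2 y2 -> x1 = x2 /\ y1 = y2) ->
  uniq [seq f x y | x <- s, y <- t x].
Proof.
elim: s => [|a s IH] //= /andP[nas us] ut hf.
rewrite cat_uniq; apply/and3P; split.
- rewrite map_inj_in_uniq ?ut ?mem_head // => y1 y2 h1 h2 e.
  by have [] := hf a a y1 y2 (mem_head _ _) (mem_head _ _) h1 h2 e.
- apply/hasP => [[z /allpairsPdep [x [y [xs yt ->]]] /mapP [y' y'a e]]].
  have [ex _] := hf x a y y' (mem_body a xs) (mem_head _ _) yt y'a e.
  by move: nas; rewrite -ex xs.
- apply: IH => //.
  + by move=> x xs; apply: ut; rewrite inE xs orbT.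
  + by move=> x1 x2 y1 y2 h1 h2; apply: hf; rewrite inE ?h1 ?h2 orbT.
Qed.

Definition cfg := seq (nat * nat).

Fixpoint ok2 (s : cfg) : bool :=
  match s with
  | [::] => true
  | p :: s' => [&& 0 < p.2,
      (match s' with [::] => true | q :: _ => (p.1 <= q.1) && (q.1 < p.1 + p.2) end)
      & ok2 s']
  end.

Definition area2 (s : cfg) := sumn (map snd s).

Definition shape2 k (s : cfg) := [&& size s == k, ok2 s & (head (0,0) s).1 == 0].

Fixpoint E (K j b : nat) : seq cfg :=
  match K with
  | 0 => if 0 < j then [:: [:: (b, j)]] else [::]
  | K'.+1 => [seq (b, j - i) :: s | i <- iota 0 j,
                 s <- [seq s | b' <- iota b (j - i), s <- E K' i b']]
  end.

Lemma memE K j b s :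
  (s \in E K j b) = [&& size s == K.+1, ok2 s, (head (0,0) s).1 == b & area2 s == j].
Proof.
elim: K j b s => [|K IH] j b s /=.
  case: ifP => hj; case: s => [|[a L] [|q s]] //=; rewrite ?inE /area2 /= ?addn0 ?andbT.
  - apply/idP/idP => [/eqP [-> ->]|/and3P [hL /eqP -> /eqP ->]] //.
    by rewrite hj !eqxx.
  - by apply/negbTE/eqP => -[].
  - by symmetry; apply/negbTE/and3P => [[h _ /eqP e]]; move: hj; rewrite -e h.
apply/allpairsPdep/idP => [[i [s' [hi hs' ->]]]|].
  move/allpairsPdep: hs' => [b' [s'' [hb' hs'' ->]]].
  rewrite IH in hs''; rewrite mem_iota in hi; rewrite mem_iota in hb'.
  case: s'' hs'' => [|[a' L'] s''] //= /and4P [/eqP sz hok /eqP hb /eqP har].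
  rewrite /area2 /= in har *; rewrite sz eqxx hok /= hb eqxx /= -/(area2 _) -har.
  rewrite /area2 /=; apply/andP; split; [apply/and3P; split => //; lia | apply/eqP; lia].
case: s => [|[a L] s] //= /and4P [hsz /and3P [hL hch hok] /eqP hb har].
exists (area2 s), s; split.
- rewrite mem_iota; move: har; rewrite /area2 /=; lia.
- apply/allpairsPdep; exists (head (0,0) s).1, s; split => //.
  + rewrite mem_iota; move: hsz hch har; rewrite hb {hok}.
    case: s => [|[a' L'] s]; first by [].
    move=> _ /andP[/= h1 h2]; rewrite /area2 /= => /eqP h; lia.
  + by rewrite IH -eqSS hsz hok !eqxx.
- congr (_ :: _); rewrite hb; congr (_, _); move: har; rewrite /area2 /=; lia.
Qed.

Lemma uniqE K j b : uniq (E K j b).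
Proof.
elim: K j b => [|K IH] j b /=; first by case: ifP.
apply: uniq_allp; first exact: iota_uniq.
- move=> i _; apply: uniq_allp => //; first exact: iota_uniq.
  move=> b1 b2 s1 s2 _ _; rewrite !memE => /and4P[_ _ /eqP h1 _] /and4P[_ _ /eqP h2 _] e.
  by subst s2; rewrite -h1 -h2.
- move=> i1 i2 s1 s2 _ _ /allpairsPdep [b1 [t1 [_ h1 ->]]] /allpairsPdep [b2 [t2 [_ h2 ->]]] [e].
  move=> e'; subst t2; split => //.
  by move: h1 h2; rewrite !memE => /and4P[_ _ _ /eqP <-] /and4P[_ _ _ /eqP <-].
Qed.

Lemma sumn_const (T : Type) (s : seq T) c : sumn [seq c | _ <- s] = size s * c.
Proof. by elim: s => //= x s ->; rewrite mulSn. Qed.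

Lemma sumn_iota (F : nat -> nat) j : sumn [seq F i | i <- iota 0 j] = \sum_(i < j) F i.
Proof.
rewrite sumnE big_map; have -> : iota 0 j = index_iota 0 j by rewrite /index_iota subn0.
by rewrite big_mkord.
Qed.

Lemma sizeE K j b : size (E K j b) = hK K j.
Proof.
elim: K j b => [|K IH] j b /=; first by case: j => //= j; rewrite bin0.
rewrite size_allpairs_dep.
rewrite (eq_map (fun i => (_ : size [seq s | b' <- iota b (j - i), s <- E K i b'] = (j - i) * hK K i))).
  by rewrite sumn_iota hK_rec.
by move=> i; rewrite size_allpairs_dep (eq_map (fun b' => IH i b')) sumn_const size_iota.
Qed.

Fixpoint cprod (T : Type) (ss : seq (seq T)) : seq (seq T) :=
  match ss with
  | [::] => [:: [::]]
  | s :: ss' => [seq x :: y | x <- s, y <- cprod ss']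
  end.

Lemma size_cprod T (ss : seq (seq T)) : size (cprod ss) = \prod_(s <- ss) size s.
Proof. by elim: ss => [|s ss IH] /=; rewrite ?big_nil ?big_cons // size_allpairs IH. Qed.

Lemma mem_cprod (T : eqType) (ss : seq (seq T)) c :
  (c \in cprod ss) = all2 (fun x s => x \in s) c ss.
Proof.
elim: ss c => [|s ss IH] [|x c] //=.
- by apply/negbTE/allpairsP => -[[x' y] [_ _ //]].
- apply/allpairsP/andP => [[[x' y] [/= h1 h2 [-> ->]]]|[h1 h2]].
    by split => //; move: h2; rewrite IH.
  by exists (x, c); split => //; rewrite IH.
Qed.

Lemma uniq_cprod (T : eqType) (ss : seq (seq T)) : all uniq ss -> uniq (cprod ss).
Proof.
elim: ss => [|s ss IH] //= /andP[us uss].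
apply: uniq_allp => //; first by move=> x _; exact: IH.
by move=> x1 x2 y1 y2 _ _ _ _ [-> ->].
Qed.

Lemma all2_mapr (S T U : Type) (R : S -> U -> bool) (f : T -> U) c t :
  all2 R c (map f t) = all2 (fun x y => R x (f y)) c t.
Proof. by elim: c t => [|x c IH] [|y t] //=; rewrite IH. Qed.

Lemma all2E K c t :
  all2 (fun x y => x \in E K y 0) c t = all (shape2 K.+1) c && (map area2 c == t).
Proof.
elim: c t => [|x c IH] [|y t] //=; first by rewrite andbF.
rewrite memE IH eqseq_cons /shape2.
apply/idP/idP => [/andP[/and4P[a1 a2 a3 a4] /andP[h1 h2]]|
                  /andP[/andP[/and3P[a1 a2 a3] h1] /andP[a4 h2]]].
  by rewrite a1 a2 a3 a4 h1 h2.
by rewrite a1 a2 a3 a4 h1 h2.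
Qed.

Lemma leq_sumn_mem (s : seq nat) x : x \in s -> x <= sumn s.
Proof.
elim: s => [|y s IH] //=; rewrite inE => /orP[/eqP ->|h]; first exact: leq_addr.
by apply: leq_trans (IH h) _; exact: leq_addl.
Qed.

Lemma sumn_tuple m N (jt : m.-tuple 'I_N) :
  sumn (map val jt) = \sum_(l < m) (tnth jt l : nat).
Proof. by rewrite sumnE big_map big_tuple. Qed.

Definition validc d k n (c : seq cfg) :=
  [&& size c == d.-1, all (shape2 k) c & sumn (map area2 c) == n].

Definition allc d k n : seq (seq cfg) :=
  [seq c | jt : (d.-1).-tuple 'I_n.+1 <- [seq jt <- index_enum ((d.-1).-tuple 'I_n.+1)
                   | \sum_(l < d.-1) nat_of_ord (tnth jt l) == n],
           c <- cprod [seq E k.-1 (nat_of_ord x) 0 | x <- jt]].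

Lemma map_val_allc m N (jt : m.-tuple 'I_N) K :
  [seq E K (nat_of_ord x) 0 | x <- jt] = [seq E K y 0 | y <- map val jt].
Proof. by rewrite -map_comp. Qed.

Lemma mem_allc d k n c : 0 < k -> (c \in allc d k n) = validc d k n c.
Proof.
move=> k0; have kE : k = k.-1.+1 by rewrite prednK.
apply/allpairsPdep/idP => [[jt [c' [hjt hc ->]]]|].
  rewrite mem_filter in hjt; case/andP: hjt => /eqP hs _.
  move: hc; rewrite mem_cprod map_val_allc all2_mapr all2E -kE => /andP[ha /eqP hm].
  have hsz : size c' = d.-1 by rewrite -(size_map area2) hm size_map size_tuple.
  by rewrite /validc ha hsz eqxx /= hm sumn_tuple hs eqxx.
case/and3P => /eqP hsz ha /eqP hn.
have hsz' : size (map (fun s => inord (area2 s) : 'I_n.+1) c) == d.-1 by rewrite size_map hsz.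
have hmv : map val (Tuple hsz') = map area2 c.
  rewrite /= -map_comp; apply/eq_in_map => s hs /=; rewrite inordK //.
  by rewrite ltnS -hn; apply: leq_sumn_mem; apply: map_f.
exists (Tuple hsz'), c; split => //.
- rewrite mem_filter mem_index_enum andbT -sumn_tuple hmv hn //.
- by rewrite mem_cprod map_val_allc all2_mapr all2E -kE ha hmv eqxx.
Qed.

Lemma uniq_allc d k n : uniq (allc d k n).
Proof.
apply: uniq_allp.
- by rewrite filter_uniq // index_enum_uniq.
- move=> jt _; apply: uniq_cprod; apply/allP => s /mapP [x _ ->]; exact: uniqE.
move=> jt1 jt2 c1 c2 _ _ h1 h2 e; subst c2; split => //.
move: h1; rewrite mem_cprod map_val_allc all2_mapr all2E => /andP[_ /eqP h1].
move: h2; rewrite mem_cprod map_val_allc all2_mapr all2E => /andP[_ /eqP h2].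
by apply: val_inj; apply: (inj_map val_inj); rewrite -h1 -h2.
Qed.

Lemma size_allc d k n : 0 < k -> size (allc d k n) = rhs d k n.
Proof.
move=> k0; rewrite size_allpairs_dep sumnE big_map big_filter /rhs.
apply: eq_bigr => jt _; rewrite size_cprod big_map big_tuple.
by apply: eq_bigr => l _; rewrite sizeE binz_hK.
Qed.
Set Implicit Arguments. Unset Strict Implicit. Unset Printing Implicit Defensive.



Definition mkcell d (f : nat -> int) : cell d := [tuple f (nat_of_ord i) | i < d].

Lemma coord_mkcell d f l : l < d -> coord (mkcell d f) l = f l.
Proof.
move=> h; rewrite /coord /mkcell.
by rewrite (_ : l = nat_of_ord (Ordinal h)) // nth_mktuple.
Qed.

Lemma cell_eq d (t u : cell d) : (forall l, l < d -> coord t l = coord u l) -> t = u.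
Proof.
move=> h; apply: val_inj; apply: (@eq_from_nth _ (0 : int)); first by rewrite !size_tuple.
by move=> i; rewrite size_tuple => hi; exact: h.
Qed.

Definition aL (c : seq cfg) (l x : nat) : nat * nat := nth (0,0) (nth [::] c l.-1) x.

Definition inr (p : nat * nat) (z : int) : bool := (p.1%:Z <= z)%R && (z < (p.1 + p.2)%:Z)%R.

Definition inbox d k (c : seq cfg) (t : cell d) : bool :=
  [&& (0 <= coord t 0)%R, (coord t 0 < k%:Z)%R &
      [forall l : 'I_d, (0 < l) ==> inr (aL c l (absz (coord t 0))) (coord t l)]].

Definition bnd k (c : seq cfg) := k + sumn [seq sumn [seq p.1 + p.2 | p <- s] | s <- c].

Definition grid d B : seq (cell d) :=
  [seq map_tuple (fun i : 'I_B.+1 => Posz i) t | t <- index_enum (d.-tuple 'I_B.+1)].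

Definition build d k (c : seq cfg) : {fset cell d} :=
  [fset t in grid d (bnd k c) | inbox k c t]%fset.

Lemma aL_in c l x : 0 < (aL c l x).2 ->
  (aL c l x).1 + (aL c l x).2 <= sumn [seq sumn [seq p.1 + p.2 | p <- s] | s <- c].
Proof.
rewrite /aL => h.
have hx : x < size (nth [::] c l.-1).
  by rewrite ltnNge; apply/negP => hs; move: h; rewrite nth_default.
have hl : l.-1 < size c.
  rewrite ltnNge; apply/negP => hs; move: hx; rewrite nth_default //.
apply: leq_trans (leq_sumn_mem (map_f _ (mem_nth [::] hl))).
apply: (leq_sumn_mem (map_f (fun p : nat * nat => p.1 + p.2) (mem_nth (0,0) hx))).
Qed.

Lemma mem_grid d B (t : cell d) :
  (forall i, i < d -> (0 <= coord t i)%R && (coord t i < B%:Z)%R) -> t \in grid d B.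
Proof.
move=> h; apply/mapP.
exists (map_tuple (fun z : int => inord (absz z) : 'I_B.+1) t); first exact: mem_index_enum.
apply: cell_eq => l hl; rewrite /coord /= -map_comp.
rewrite (nth_map (0 : int)); last by rewrite size_tuple.
have := h l hl; rewrite /coord /= => hb.
rewrite inordK; lia.
Qed.

Lemma mem_build d k c (t : cell d) : (t \in build d k c) = inbox k c t.
Proof.
rewrite /build !inE; apply/idP/idP => [/andP[]//|hb]; apply/andP; split => //.
apply: mem_grid => i hi; move: hb; rewrite /inbox /bnd => /and3P[h0 h1 /forallP hl].
case: i hi => [|i] hi; first by apply/andP; split => //; lia.
have := hl (Ordinal hi); rewrite /= /inr => /andP[a1 a2].
have hp : 0 < (aL c i.+1 `|coord t 0|).2 by lia.
have := aL_in hp => hh; apply/andP; split; lia.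
Qed.

Lemma okL s x : ok2 s -> x < size s -> 0 < (nth (0,0) s x).2.
Proof. by elim: s x => [|p s IH] [|x] //= /and3P[h1 _ h3] hx //; apply: IH. Qed.

Lemma okC s x : ok2 s -> x.+1 < size s ->
  ((nth (0,0) s x).1 <= (nth (0,0) s x.+1).1) &&
  ((nth (0,0) s x.+1).1 < (nth (0,0) s x).1 + (nth (0,0) s x).2).
Proof.
elim: s x => [|p s IH] [|x] //=.
- by case: s {IH} => [|q s] //= /and3P[_ h _].
- by move=> /and3P[_ _ h] hx; apply: IH.
Qed.

Definition shp d k (c : seq cfg) := (size c == d.-1) && all (shape2 k) c.

Lemma shpl d k c l : shp d k c -> 0 < l < d -> shape2 k (nth [::] c l.-1).
Proof.
move=> /andP[/eqP hs /allP ha] hl; apply: ha; apply: mem_nth; rewrite hs; lia.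
Qed.

Lemma aLpos d k c l x : shp d k c -> 0 < l < d -> x < k -> 0 < (aL c l x).2.
Proof.
move=> hs hl hx; have /and3P[/eqP h1 h2 _] := shpl hs hl.
by apply: okL => //; rewrite h1.
Qed.

Lemma aLchain d k c l x : shp d k c -> 0 < l < d -> x.+1 < k ->
  ((aL c l x).1 <= (aL c l x.+1).1) && ((aL c l x.+1).1 < (aL c l x).1 + (aL c l x).2).
Proof.
move=> hs hl hx; have /and3P[/eqP h1 h2 _] := shpl hs hl.
by apply: okC => //; rewrite h1.
Qed.

Lemma aL0 d k c l : shp d k c -> 0 < l < d -> (aL c l 0).1 = 0.
Proof.
move=> hs hl; have /and3P[_ _ h3] := shpl hs hl.
by apply/eqP; rewrite /aL nth0.
Qed.

Definition pt d c (x l0 : nat) (w : int) : cell d :=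
  mkcell d (fun i => if i == 0 then Posz x else if i == l0 then w else Posz (aL c i x).1).

Lemma pt0 d c x l0 w : 0 < d -> coord (pt d c x l0 w) 0 = Posz x.
Proof. by move=> h; rewrite coord_mkcell. Qed.

Lemma ptl d c x l0 w : 0 < l0 < d -> coord (pt d c x l0 w) l0 = w.
Proof. by move=> /andP[h1 h2]; rewrite coord_mkcell // ifN ?eqxx //; lia. Qed.

Lemma pt_in d k c x l0 w : 0 < d -> shp d k c -> x < k ->
  (0 < l0 < d -> inr (aL c l0 x) w) -> inbox k c (pt d c x l0 w).
Proof.
move=> d0 hs hx hw; rewrite /inbox pt0 //; apply/and3P; split; try lia.
apply/forallP => l; apply/implyP => hl.
rewrite coord_mkcell // ifN; last by rewrite -lt0n.
have hl' : 0 < l < d by rewrite hl ltn_ord.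
case: ifP => [/eqP e|_]; first by subst l0; exact: hw.
have := aLpos hs hl' hx; rewrite /inr /= => hp; apply/andP; split; lia.
Qed.

Lemma inbox_l d k c (t : cell d) l : inbox k c t -> 0 < l < d ->
  inr (aL c l `|coord t 0|) (coord t l).
Proof.
move=> /and3P[_ _ /forallP h] /andP[h1 h2].
by have /implyP := h (Ordinal h2); apply.
Qed.

Lemma inbox_0 d k c (t : cell d) : inbox k c t -> (0 <= coord t 0)%R && (coord t 0 < Posz k)%R.
Proof. by case/and3P => -> ->. Qed.

Definition zc d (k : nat) c := pt d c 0 0 0.

Lemma zc_coord d k c l : shp d k c -> l < d -> coord (zc d k c) l = 0%R.
Proof.
move=> hs hl; rewrite /zc /pt coord_mkcell //.
case: ifP => // /negbT hl0; rewrite ifN //.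
by rewrite (aL0 hs) //; rewrite lt0n hl0.
Qed.

Lemma zc_in d k c : 0 < d -> 0 < k -> shp d k c -> zc d k c \in build d k c.
Proof. by move=> d0 k0 hs; rewrite mem_build; apply: pt_in => //; lia. Qed.

Lemma build_normalized d k c : 0 < d -> 0 < k -> shp d k c -> normalized (build d k c).
Proof.
move=> d0 k0 hs l hl; split.
  move=> t; rewrite mem_build => hb.
  case: l hl => [|l] hl; first by have := inbox_0 hb; lia.
  by have := inbox_l hb (l := l.+1); rewrite /inr; lia.
by exists (zc d k c); [exact: zc_in | exact: zc_coord].
Qed.

Lemma build_plateaus d k c : all_plateaus (build d k c).
Proof.
move=> t; rewrite mem_build => ht.
set x := `|coord t 0|.
exists (mkcell d (fun i => Posz (aL c i x).1)),
       (mkcell d (fun i => (Posz ((aL c i x).1 + (aL c i x).2) - 1)%R)) => u hu.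
rewrite mem_build; split.
  move=> hb l /andP[hl1 hl2]; rewrite !coord_mkcell //.
  have := inbox_l hb (l := l); rewrite /inr hu -/x; lia.
move=> h; apply/and3P; split; try (have := inbox_0 ht; rewrite hu; lia).
apply/forallP => l; apply/implyP => hl.
have := ltn_ord l; have := h l; rewrite !coord_mkcell // /inr hu -/x; lia.
Qed.

Lemma card_char (T : choiceType) (A : {fset T}) (s : seq T) :
  uniq s -> (forall y, (y \in A) = (y \in s)) -> #|` A|%fset = size s.
Proof.
move=> us h; have -> : A = [fset y in s]%fset by apply/fsetP => y; rewrite h inE.
by rewrite card_fseq undup_id.
Qed.

Lemma Posz_inj : injective Posz. Proof. by move=> x y [->]. Qed.

Lemma build_width d k c : 0 < d -> shp d k c -> width (build d k c) = k.
Proof.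
move=> d0 hs; rewrite /width (card_char (s := map Posz (iota 0 k))).
- by rewrite size_map size_iota.
- by rewrite map_inj_uniq ?iota_uniq //; exact: Posz_inj.
move=> z; apply/imfsetP/mapP => [[t ht ->]|[x hx ->]].
  move: ht; rewrite mem_build => /inbox_0 h.
  by exists `|coord t 0|; rewrite ?mem_iota; lia.
rewrite mem_iota in hx.
exists (pt d c x 0 0); last by rewrite pt0.
by rewrite mem_build; apply: pt_in => //; lia.
Qed.

Lemma area2_nth s k : size s = k -> area2 s = sumn [seq (nth (0,0) s x).2 | x <- iota 0 k].
Proof. by move=> <-; rewrite /area2 -{1}(mkseq_nth (0,0) s) /mkseq -map_comp. Qed.

Lemma build_lat d k c l : 0 < l < d -> shp d k c ->
  #|` [fset (coord t 0, coord t l) | t in build d k c]|%fset = area2 (nth [::] c l.-1).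
Proof.
move=> hl hs.
have d0 : 0 < d by lia.
rewrite (card_char (s := [seq (Posz x, Posz y) | x <- iota 0 k,
                              y <- iota (aL c l x).1 (aL c l x).2])).
- rewrite size_allpairs_dep.
  have /and3P[/eqP hsz _ _] := shpl hs hl.
  rewrite (area2_nth hsz); congr sumn; apply/eq_map => x; by rewrite size_iota.
- apply: uniq_allp; first exact: iota_uniq; first by move=> x _; exact: iota_uniq.
  by move=> x1 x2 y1 y2 _ _ _ _ [-> ->].
case=> z w; apply/imfsetP/allpairsPdep => [[t ht [-> ->]]|[x [y [hx hy [-> ->]]]]].
  move: ht; rewrite mem_build => ht.
  have := inbox_0 ht; have := inbox_l ht hl; rewrite /inr => h1 h2.
  exists `|coord t 0|, `|coord t l|; split; rewrite ?mem_iota; try lia.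
  by congr (_, _); lia.
exists (pt d c x l (Posz y)); last by rewrite pt0 // ptl.
rewrite mem_iota in hx; rewrite mem_iota in hy.
by rewrite mem_build; apply: pt_in => //.
Qed.

Lemma build_area d k c : shp d k c -> lateral_area (build d k c) = sumn (map area2 c).
Proof.
move=> hs; rewrite /lateral_area.
rewrite (@eq_big_nat _ _ _ 1 d _ (fun l => area2 (nth [::] c l.-1))); last first.
  by move=> l hl; apply: build_lat.
rewrite big_add1 /=.
case/andP: hs => /eqP hsz _.
by rewrite sumnE big_map (big_nth [::]) hsz.
Qed.

Definition dec d (t : cell d) i : cell d :=
  mkcell d (fun j => (coord t j - Posz (j == i))%R).

Definition meas d (t : cell d) := \sum_(i < d) `|coord t i|.

Lemma coord_dec d (t : cell d) i j : j < d ->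
  coord (dec t i) j = (coord t j - Posz (j == i))%R.
Proof. by move=> h; rewrite coord_mkcell. Qed.

Lemma step_dec d (t : cell d) i : i < d -> elem_step (dec t i) t.
Proof.
move=> h; apply/existsP; exists (Ordinal h); rewrite /= coord_dec // eqxx.
apply/andP; split; first by apply/eqP; lia.
apply/forallP => j; apply/implyP => hj; rewrite coord_dec //.
have : nat_of_ord j != i by apply: contra hj => /eqP e; apply/eqP/val_inj.
by move=> /negbTE ->; lia.
Qed.

Lemma meas_dec d (t : cell d) i : i < d -> (0 < coord t i)%R -> meas (dec t i) < meas t.
Proof.
move=> h hp; rewrite /meas (bigD1 (Ordinal h)) //= [X in _ < X](bigD1 (Ordinal h)) //=.
rewrite (eq_bigr (fun j : 'I_d => `|coord t j|)).
  by rewrite coord_dec // eqxx; lia.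
move=> j hj; rewrite coord_dec //.
have : nat_of_ord j != i by apply: contra hj => /eqP e; apply/eqP/val_inj.
by move=> /negbTE ->; lia.
Qed.

Lemma pred_build d k c (t : cell d) : 0 < d -> shp d k c -> t \in build d k c ->
  t != zc d k c -> exists2 p, p \in build d k c & elem_step p t && (meas p < meas t).
Proof.
move=> d0 hs; rewrite !mem_build => ht hnz.
have [h0a h0b] : (0 <= coord t 0)%R /\ (coord t 0 < Posz k)%R by have := inbox_0 ht; lia.
set x := `|coord t 0|.
case: (boolP [exists l : 'I_d, (0 < l) && (Posz (aL c l x).1 < coord t l)%R]).
  move=> /existsP [l /andP [hl hlt]].
  exists (dec t l).
    rewrite mem_build /inbox coord_dec //.
    have e0 : (0 == nat_of_ord l) = false by rewrite eq_sym; apply/negbTE; rewrite -lt0n.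
    have -> : (coord t 0 - Posz (0 == nat_of_ord l))%R = coord t 0 by rewrite e0; lia.
    rewrite h0a h0b /=.
    apply/forallP => j; apply/implyP => hj; rewrite coord_dec //.
    have hj' : 0 < j < d by rewrite hj ltn_ord.
    have := inbox_l ht hj'; rewrite /inr -/x.
    case: (eqVneq (nat_of_ord j) (nat_of_ord l)) => [e|ne].
      rewrite e in hj' *; lia.
    lia.
  by rewrite step_dec ?ltn_ord //= meas_dec ?ltn_ord //; lia.
move=> /existsPn hn.
have hall : forall l, 0 < l < d -> coord t l = Posz (aL c l x).1.
  move=> l hl; case/andP: (hl) => hl1 hl2.
  have := hn (Ordinal hl2); have := inbox_l ht hl; rewrite /inr -/x /= hl1 /=; lia.
case: (posnP x) => hx.
  case/negP: hnz; apply/eqP; apply: cell_eq => l hl.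
  rewrite zc_coord //; case: l hl => [|l] hl; first by move: hx; rewrite /x; lia.
  rewrite hall // hx (aL0 hs) //.
exists (dec t 0).
  rewrite mem_build /inbox coord_dec // eqxx.
  have hx1 : `|(coord t 0 - 1)%R| = x.-1 by rewrite /x; lia.
  apply/and3P; split; try lia.
  apply/forallP => j; apply/implyP => hj; rewrite coord_dec //.
  have hj' : 0 < j < d by rewrite hj ltn_ord.
  have -> : (nat_of_ord j == 0) = false by apply/negbTE; rewrite -lt0n.
  have -> : (coord t j - Posz false)%R = coord t j by lia.
  have -> : `|(coord t 0 - Posz true)%R| = x.-1 by exact: hx1.
  rewrite hall //.
  have hk : x.-1.+1 < k by rewrite prednK //; lia.
  have := aLchain hs hj' hk; rewrite prednK // /inr; lia.
by rewrite step_dec //= meas_dec //; lia.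
Qed.

Lemma build_reach d k c : 0 < d -> shp d k c -> forall m (t : cell d),
  meas t <= m -> t \in build d k c ->
  exists p : seq (cell d), [&& path (@elem_step d) (zc d k c) p,
     last (zc d k c) p == t & all (fun x => x \in build d k c) p].
Proof.
move=> d0 hs; elim=> [|m IH] t hm ht.
  case: (eqVneq t (zc d k c)) => [->|ne]; first by exists [::]; rewrite /= eqxx.
  by have [p _ /andP[_ hp]] := pred_build d0 hs ht ne; move: hp hm; lia.
case: (eqVneq t (zc d k c)) => [->|ne]; first by exists [::]; rewrite /= eqxx.
have [p hp /andP[hst hme]] := pred_build d0 hs ht ne.
have [q /and3P[q1 /eqP q2 q3]] := IH p (ltnSE (leq_trans hme hm)) hp.
exists (rcons q t); rewrite rcons_path q1 q2 hst last_rcons eqxx /=.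
by rewrite all_rcons ht q3.
Qed.

Lemma build_directed d k c : 0 < d -> 0 < k -> shp d k c -> directed (build d k c).
Proof.
move=> d0 k0 hs; exists (zc d k c); first exact: zc_in.
by move=> t ht; apply: (build_reach d0 hs (leqnn _) ht).
Qed.

Lemma step_adj d (a b : cell d) : elem_step a b -> adjacent a b && adjacent b a.
Proof.
move=> /existsP [i /andP [/eqP hi /forallP hj]].
apply/andP; split; apply/existsP; exists i; rewrite hi; apply/andP; split; try lia.
- by apply/forallP => j; apply/implyP => hji; have /implyP := hj j; apply.
- apply/forallP => j; apply/implyP => hji; have /implyP := hj j.
  by move=> h; rewrite eq_sym; apply: h.
Qed.

Lemma directed_poly d (P : {fset cell d}) : directed P -> polyhypercube P.
Proof.
move=> [r hr hreach]; split.
  by apply/eqP => e; move: hr; rewrite e inE.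
move=> a b ha hb.
have [pa /and3P [pa1 /eqP pa2 pa3]] := hreach a ha.
have [pb /and3P [pb1 /eqP pb2 pb3]] := hreach b hb.
exists (rev (belast r pa) ++ pb).
have hrev : path (@adjacent d) a (rev (belast r pa)).
  rewrite -pa2 rev_path; apply: sub_path pa1 => x y /step_adj /andP[_ ->] //.
have hlast : last a (rev (belast r pa)) = r.
  case: pa pa2 {pa1 pa3 hrev} => [|z pa] /=; first by move=> ->.
  by rewrite rev_cons last_rcons.
have hpb : path (@adjacent d) r pb.
  by apply: sub_path pb1 => x y /step_adj /andP[-> _].
rewrite cat_path hrev hlast hpb /= last_cat hlast pb2 eqxx all_cat pb3 andbT /=.
apply/allP => x; rewrite mem_rev => /mem_belast; rewrite inE => /orP [/eqP ->//|].
by move/allP: pa3; apply.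
Qed.

Lemma build_counted d k n c : 0 < d -> 0 < k -> validc d k n c -> @counted d k n (build d k c).
Proof.
move=> d0 k0 /and3P [h1 h2 /eqP h3].
have hs : shp d k c by rewrite /shp h1 h2.
split.
- exact: build_normalized.
- split; [apply: directed_poly; exact: build_directed | exact: build_directed | exact: build_plateaus].
- exact: build_width.
- by rewrite build_area.
Qed.

Lemma ptother d c x l0 w l : 0 < l < d -> l != l0 -> coord (pt d c x l0 w) l = Posz (aL c l x).1.
Proof.
move=> /andP[h1 h2] hne; rewrite coord_mkcell // ifN; last by rewrite -lt0n.
by rewrite ifN.
Qed.

Lemma aL_det d k c1 c2 l x : 0 < d -> shp d k c1 -> shp d k c2 ->
  build d k c1 = build d k c2 -> 0 < l < d -> x < k ->
  ((aL c2 l x).1 <= (aL c1 l x).1) && ((aL c1 l x).1 + (aL c1 l x).2 <= (aL c2 l x).1 + (aL c2 l x).2).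
Proof.
move=> d0 hs1 hs2 e hl hx.
have hL := aLpos hs1 hl hx.
have hin1 : pt d c1 x 0 0 \in build d k c2.
  by rewrite -e mem_build; apply: pt_in => //; lia.
have hin2 : pt d c1 x l (Posz ((aL c1 l x).1 + (aL c1 l x).2) - 1)%R \in build d k c2.
  by rewrite -e mem_build; apply: pt_in => // _; rewrite /inr; lia.
rewrite mem_build in hin1; rewrite mem_build in hin2.
have := inbox_l hin1 hl; have := inbox_l hin2 hl.
rewrite !pt0 // ptl // ptother //; last by case/andP: hl => hl _; rewrite -lt0n.
rewrite /inr /=; lia.
Qed.

Lemma build_inj d k c1 c2 : 0 < d -> shp d k c1 -> shp d k c2 ->
  build d k c1 = build d k c2 -> c1 = c2.
Proof.
move=> d0 hs1 hs2 e.
have hs1' := hs1; have hs2' := hs2.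
case/andP: hs1' => /eqP hz1 _; case/andP: hs2' => /eqP hz2 _.
apply: (@eq_from_nth _ [::]); first by rewrite hz1 hz2.
move=> i hi; rewrite hz1 in hi.
have hl : 0 < i.+1 < d by lia.
have /and3P[/eqP hk1 _ _] := shpl hs1 hl; have /and3P[/eqP hk2 _ _] := shpl hs2 hl.
apply: (@eq_from_nth _ (0,0)); first by rewrite hk1 hk2.
move=> x hx; rewrite hk1 in hx.
have := aL_det d0 hs1 hs2 e hl hx; have := aL_det d0 hs2 hs1 (esym e) hl hx.
rewrite /aL /=; case: (nth (0,0) (nth [::] c1 i) x) => a1 L1; case: (nth (0,0) (nth [::] c2 i) x) => a2 L2 /=.
move=> h h'; have ea : a1 = a2 by lia.
have eL : L1 = L2 by lia.
by rewrite ea eL.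
Qed.

Lemma step_props d (a b : cell d) l : elem_step a b -> l < d ->
  (coord a l <= coord b l)%R && (coord b l <= coord a l + 1)%R.
Proof.
move=> /existsP [i /andP [/eqP hi /forallP hj]] hl.
case: (eqVneq (Ordinal hl) i) => [e|ne]; first by move: hi; rewrite -e /=; lia.
have /implyP /(_ ne) /eqP := hj (Ordinal hl); rewrite /= => ->; lia.
Qed.

Lemma path_mono d (a : cell d) p l : path (@elem_step d) a p -> l < d ->
  (coord a l <= coord (last a p) l)%R.
Proof.
elim: p a => [|b p IH] a /=; first by lia.
move=> /andP [hab hp] hl; have := step_props hab hl; have := IH b hp hl; lia.
Qed.

Lemma path_interval d (P : {fset cell d}) (a : cell d) p (z : int) : 0 < d ->
  path (@elem_step d) a p -> a \in P -> all (fun x => x \in P) p ->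
  (coord a 0 <= z)%R -> (z <= coord (last a p) 0)%R ->
  exists2 u, u \in P & coord u 0 = z.
Proof.
move=> d0; elim: p a => [|b p IH] a /=; first by move=> _ ha _ h1 h2; exists a => //; lia.
move=> /andP [hab hp] ha /andP [hb hall] h1 h2.
case: (eqVneq (coord a 0) z) => [<-|ne]; first by exists a.
apply: (IH b) => //; have := step_props hab d0; lia.
Qed.

Lemma dir_pred d (P : {fset cell d}) r (t : cell d) :
  (forall c, c \in P -> exists p : seq (cell d),
        [&& path (@elem_step d) r p, last r p == c & all (fun x => x \in P) p]) ->
  r \in P -> t \in P -> t != r -> exists2 p, p \in P & elem_step p t.
Proof.
move=> hreach hr ht ne; have [p /and3P [h1 /eqP h2 h3]] := hreach t ht.
case/lastP: p h1 h2 h3 => [|q y] /=; first by move=> _ e; move: ne; rewrite e eqxx.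
rewrite rcons_path last_rcons all_rcons => /andP [_ hst] <- /andP [_ hq].
exists (last r q) => //.
have := mem_last r q; rewrite inE => /orP [/eqP -> //|]; by move/allP: hq; apply.
Qed.

Lemma card_le_seq (A : {fset int}) (s : seq int) :
  uniq s -> (forall z, z \in A -> z \in s) -> #|` A|%fset <= size s.
Proof.
move=> us h; rewrite -(card_char (A := [fset z in s]%fset) us); last by move=> y; rewrite inE.
by apply: fsubset_leq_card; apply/fsubsetP => z hz; rewrite inE; apply: h.
Qed.

Lemma card_ge_seq (A : {fset int}) (s : seq int) :
  uniq s -> (forall z, z \in s -> z \in A) -> size s <= #|` A|%fset.
Proof.
move=> us h; rewrite -(card_char (A := [fset z in s]%fset) us); last by move=> y; rewrite inE.
by apply: fsubset_leq_card; apply/fsubsetP => z; rewrite inE; apply: h.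
Qed.

Lemma strata d k (P : {fset cell d}) : 0 < d -> normalized P -> directed P -> width P = k ->
  (forall t, t \in P -> (0 <= coord t 0)%R && (coord t 0 < Posz k)%R) /\
  (forall x, x < k -> exists2 u, u \in P & coord u 0 = Posz x).
Proof.
move=> d0 hn [r hr hreach] hw.
have [hnn [t0 ht0 e0]] := hn 0 d0.
have r0 : coord r 0 = 0%R.
  have [p /and3P [h1 /eqP h2 h3]] := hreach t0 ht0.
  have := path_mono h1 d0; rewrite h2 e0; have := hnn r hr; lia.
have hint : forall t, t \in P -> forall z, (0 <= z)%R -> (z <= coord t 0)%R ->
    exists2 u, u \in P & coord u 0 = z.
  move=> t ht z hz1 hz2; have [p /and3P [h1 /eqP h2 h3]] := hreach t ht.
  apply: (path_interval d0 h1 hr h3); rewrite ?h2 ?r0 //.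
have uP : uniq (map Posz (iota 0 k.+1)) by rewrite map_inj_uniq ?iota_uniq //; exact: Posz_inj.
split.
  move=> t ht; rewrite hnn //=.
  case: (boolP (coord t 0 < Posz k)%R) => // /negP hge; exfalso.
  have := card_ge_seq (A := [fset coord t 0 | t in P]%fset) uP.
  rewrite -/(width P) hw size_map size_iota ltnn => h; suff : false by []; apply: h.
  move=> z /mapP [x]; rewrite mem_iota => hx ->.
  have [u hu eu] := hint t ht (Posz x) ltac:(lia) ltac:(lia).
  by apply/imfsetP; exists u.
move=> x hx.
case: (boolP (Posz x \in [fset coord t 0 | t in P]%fset)).
  by move=> /imfsetP [u hu ->]; exists u.
move=> hnx; exfalso.
have uP' : uniq (map Posz (iota 0 x)) by rewrite map_inj_uniq ?iota_uniq //; exact: Posz_inj.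
have := card_le_seq (A := [fset coord t 0 | t in P]%fset) uP'.
rewrite -/(width P) hw size_map size_iota => h.
have : k <= x; last by lia.
apply: h => z /imfsetP [t ht ->].
apply/mapP; exists `|coord t 0|; last by have := hnn t ht; lia.
rewrite mem_iota /=; case: (boolP (coord t 0 < Posz x)%R) => hlt; first by have := hnn t ht; lia.
have [u hu eu] := hint t ht (Posz x) ltac:(lia) ltac:(lia).
by case/negP: hnx; apply/imfsetP; exists u.
Qed.

Definition zcell d : cell d := mkcell d (fun _ => 0%R).

Definition boxspec d (P : {fset cell d}) (x : nat) (b : cell d * cell d) :=
  forall t : cell d, coord t 0 = Posz x ->
    (t \in P <-> forall l, (1 <= l < d)%N -> (coord b.1 l <= coord t l <= coord b.2 l)%R).

Lemma choose_boxes d (P : {fset cell d}) k :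
  (forall x, x < k -> plateau_at P (Posz x)) ->
  exists s : seq (cell d * cell d), size s = k /\
     forall x, x < k -> boxspec P x (nth (zcell d, zcell d) s x).
Proof.
elim: k => [|k IH] hp; first by exists [::].
have [s [hs hsp]] := IH (fun x hx => hp x (leq_trans hx (leqnSn k))).

have [lo [hi hb]] := hp k (leqnn _).
exists (rcons s (lo, hi)); split; first by rewrite size_rcons hs.
move=> x hx; rewrite nth_rcons hs.
case: (ltnP x k) => h; first exact: hsp.
have -> : x = k by lia.
by rewrite eqxx.
Qed.

Lemma ok2_iota (f : nat -> nat * nat) m k :
  (forall x, m <= x < m + k -> 0 < (f x).2) ->
  (forall x, m <= x -> x.+1 < m + k -> ((f x).1 <= (f x.+1).1) && ((f x.+1).1 < (f x).1 + (f x).2)) ->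
  ok2 [seq f x | x <- iota m k].
Proof.
elim: k m => [|k IH] m h1 h2 //=.
apply/and3P; split.
- by apply: h1; lia.
- case: k IH h1 h2 => [|k] IH h1 h2 //=; apply: h2; lia.
- apply: IH => x hx; [apply: h1 | move=> hx'; apply: h2]; lia.
Qed.

Definition mkcode d k (lo hi : nat -> cell d) : seq cfg :=
  [seq [seq (`|coord (lo x) l|, `|(coord (hi x) l - coord (lo x) l)%R|.+1) | x <- iota 0 k]
     | l <- iota 1 d.-1].

Lemma nth_mkcode d k (lo hi : nat -> cell d) l : 0 < l < d ->
  nth [::] (mkcode k lo hi) l.-1 =
  [seq (`|coord (lo x) l|, `|(coord (hi x) l - coord (lo x) l)%R|.+1) | x <- iota 0 k].
Proof.
move=> hl; rewrite /mkcode (nth_map 0); last by rewrite size_iota; lia.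
rewrite nth_iota; last by lia.
by rewrite add1n prednK //; lia.
Qed.

Lemma aL_mkcode d k (lo hi : nat -> cell d) l x : 0 < l < d -> x < k ->
  aL (mkcode k lo hi) l x = (`|coord (lo x) l|, `|(coord (hi x) l - coord (lo x) l)%R|.+1).
Proof.
move=> hl hx; rewrite /aL nth_mkcode // (nth_map 0); last by rewrite size_iota.
by rewrite nth_iota.
Qed.

Lemma root_zero d (P : {fset cell d}) r : normalized P -> r \in P ->
  (forall c, c \in P -> exists p : seq (cell d),
        [&& path (@elem_step d) r p, last r p == c & all (fun x => x \in P) p]) ->
  forall l, l < d -> coord r l = 0%R.
Proof.
move=> hn hr hreach l hl.
have [hnn [t0 ht0 e0]] := hn l hl.
have [p /and3P [h1 /eqP h2 h3]] := hreach t0 ht0.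
have := path_mono h1 hl; rewrite h2 e0; have := hnn r hr; lia.
Qed.

Lemma surj d k n (P : {fset cell d}) : 0 < d -> 0 < k -> @counted d k n P ->
  exists2 c, validc d k n c & build d k c = P.
Proof.
move=> d0 k0 [hn [hpoly hdir hplat] hw hla].
have [hS1 hS2] := strata d0 hn hdir hw.
have hpl : forall x, x < k -> plateau_at P (Posz x).
  by move=> x hx; have [u hu <-] := hS2 x hx; exact: hplat.
have [s [hs hsp]] := choose_boxes hpl.
set lo := fun x => (nth (zcell d, zcell d) s x).1.
set hi := fun x => (nth (zcell d, zcell d) s x).2.
have spec : forall x, x < k -> forall t : cell d, coord t 0 = Posz x ->
    (t \in P <-> forall l, 0 < l < d -> (coord (lo x) l <= coord t l <= coord (hi x) l)%R).
  by move=> x hx t ht; exact: hsp.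
have nonempty : forall x l, x < k -> 0 < l < d -> (coord (lo x) l <= coord (hi x) l)%R.
  move=> x l hx hl; have [u hu eu] := hS2 x hx.
  have := (spec x hx u eu).1 hu l hl; lia.
pose corner x : cell d := mkcell d (fun i => if i == 0 then Posz x else coord (lo x) i).
have corner0 : forall x, coord (corner x) 0 = Posz x by move=> x; rewrite coord_mkcell.
have cornerl : forall x l, 0 < l < d -> coord (corner x) l = coord (lo x) l.
  by move=> x l hl; rewrite coord_mkcell ?ifN //; lia.
have corner_in : forall x, x < k -> corner x \in P.
  move=> x hx; apply: (spec x hx _ (corner0 x)).2 => l hl.
  rewrite cornerl //; have := nonempty x l hx hl; lia.
have lo_nn : forall x l, x < k -> 0 < l < d -> (0 <= coord (lo x) l)%R.
  move=> x l hx hl; have [hnn _] := hn l ltac:(lia).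
  by rewrite -cornerl //; apply: hnn; apply: corner_in.
case: hdir => r hr hreach.
have r0 := root_zero hn hr hreach.
have chain : forall x l, x.+1 < k -> 0 < l < d ->
    (coord (lo x) l <= coord (lo x.+1) l)%R && (coord (lo x.+1) l <= coord (hi x) l)%R.
  move=> x l hx hl.
  have hne : corner x.+1 != r.
    by apply/eqP => e; have := r0 0 d0; rewrite -e corner0.
  have [p hp hst] := dir_pred hreach hr (corner_in _ hx) hne.
  move: hst => /existsP [i /andP [/eqP hi' /forallP hj]].
  have hj' : forall j, j < d -> j != i -> coord p j = coord (corner x.+1) j.
    by move=> j hjd ne; have /implyP /(_ ne) /eqP := hj (Ordinal hjd).
  case: (posnP i) => hi0.
    have hp0 : coord p 0 = Posz x by move: hi'; rewrite hi0 corner0; lia.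
    have := (spec x (ltnW hx) p hp0).1 hp l hl.
    have hld : l < d by lia.
    have hli : (l != i) by rewrite hi0; lia.
    by rewrite (hj' l hld hli) cornerl.
  exfalso.
  have hp0 : coord p 0 = Posz x.+1.
    have h0i : (0 != nat_of_ord i) by rewrite neq_ltn hi0.
    by rewrite (hj' 0 d0 h0i) corner0.
  have hid : 0 < i < d by rewrite hi0 ltn_ord.
  have := (spec _ hx p hp0).1 hp i hid.
  by move: hi'; rewrite cornerl //; lia.
have head0 : forall l, 0 < l < d -> coord (lo 0) l = 0%R.
  move=> l hl; have := (spec 0 k0 r (r0 0 d0)).1 hr l hl.
  rewrite r0; last by lia.
  by have := lo_nn 0 l k0 hl; lia.
pose c := mkcode k lo hi.
have hshp : shp d k c.
  apply/andP; split; first by rewrite size_map size_iota.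
  apply/allP => cf /mapP [l]; rewrite mem_iota => hl ->.
  have hl' : 0 < l < d by lia.
  apply/and3P; split.
  - by rewrite size_map size_iota.
  - apply: ok2_iota => x hx //=.
    move=> hx'; rewrite add0n in hx'.
    have := chain x l hx' hl'; have := lo_nn x l (ltnW hx') hl';
      have := lo_nn x.+1 l hx' hl'; lia.
  - by rewrite -nth0 (nth_map 0) ?size_iota //= nth_iota // head0.
have hinr : forall x l z, x < k -> 0 < l < d ->
    inr (aL c l x) z = (coord (lo x) l <= z)%R && (z <= coord (hi x) l)%R.
  move=> x l z hx hl; rewrite aL_mkcode // /inr /=.
  have := lo_nn x l hx hl; have := nonempty x l hx hl.
  move=> h1 h2; apply/idP/idP; lia.
have hb : build d k c = P.
  apply/fsetP => t; rewrite mem_build; apply/idP/idP.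
    move=> ht; have /andP [h0 h1] := inbox_0 ht.
    have hx : `|coord t 0| < k by lia.
    have ht0 : coord t 0 = Posz `|coord t 0| by lia.
    apply: (spec _ hx t ht0).2 => l hl.
    by have := inbox_l ht hl; rewrite hinr.
  move=> ht; have /andP [h0 h1] := hS1 t ht.
  have hx : `|coord t 0| < k by lia.
  have ht0 : coord t 0 = Posz `|coord t 0| by lia.
  have hbox := (spec _ hx t ht0).1 ht.
  rewrite /inbox h0 h1 /=; apply/forallP => l; apply/implyP => hl.
  have hl' : 0 < l < d by rewrite hl ltn_ord.
  by rewrite hinr //; apply: hbox.
exists c => //.
case/andP: (hshp) => h1 h2; rewrite /validc h1 h2 /=.
by rewrite -(build_area hshp) hb hla.
Qed.

Theorem theorem2 (d k n : nat) :
  (3 <= d)%N -> (1 <= k)%N -> ((d - 1) * k <= n)%N ->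
  card_is (@counted d k n) (rhs d k n).
Proof.
move=> hd hk _.
have d0 : 0 < d by lia.
have shpv : forall c, validc d k n c -> shp d k c.
  by move=> c /and3P [h1 h2 _]; rewrite /shp h1 h2.
exists (map (build d k) (allc d k n)); split.
- rewrite map_inj_in_uniq ?uniq_allc // => c1 c2 h1 h2 e.
  rewrite mem_allc // in h1; rewrite mem_allc // in h2.
  exact: build_inj d0 (shpv _ h1) (shpv _ h2) e.
- move=> P; split.
    by move=> /mapP [c hc ->]; apply: build_counted => //; rewrite -mem_allc.
  move=> hP; have [c hc <-] := surj d0 hk hP.
  by apply: map_f; rewrite mem_allc.
- by rewrite size_map size_allc.
Qed.
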